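(* Let $G$ be a bipartite graph with minimum degree $\delta$. Then $R(G)\leqslant\sqrt{\delta}$. Moreover, if $\delta\geqslant 2$, or if $\delta=1$ and $G$ has a connected component with minimum degree $1$ that is not isomorphic to $K_2$, then $R(G)<\sqrt{\delta}$.
   Context: All graphs are simple. For a graph $G$ of order $n$ with adjacency eigenvalues $\lambda_1\geqslant\cdots\geqslant\lambda_n$, the HL-index is $R(G)=\max\{|\lambda_{\lfloor (n+1)/2\rfloor}|,\ |\lambda_{\lceil (n+1)/2\rceil}|\}$. *)

(* Defs.v *)
From HB Require Import structures.
From mathcomp Require Import all_boot all_order all_algebra.
Set Implicit Arguments. Unset Strict Implicit. Unset Printing Implicit Defensive.
Import Order.TTheory GRing.Theory Num.Theory.
Local Open Scope ring_scope.

Definition simple_graph (n : nat) (e : rel 'I_n) : Prop :=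
  symmetric e /\ irreflexive e.

Definition deg (n : nat) (e : rel 'I_n) (v : 'I_n) : nat := #|[set w | e v w]|.

(* minimum degree of the graph (n > 0 assumed; n is an upper bound of degrees) *)
Definition min_degree (n : nat) (e : rel 'I_n) : nat :=
  \big[minn/n]_(v < n) deg e v.

Definition bipartite (n : nat) (e : rel 'I_n) : Prop :=
  exists f : 'I_n -> bool, forall v w, e v w -> f v != f w.

Definition component (n : nat) (e : rel 'I_n) (v : 'I_n) : {set 'I_n} :=
  [set w | connect e v w].

(* minimum degree of the component C (as induced subgraph; degrees inside a
   component equal degrees in G) *)
Definition comp_min_degree (n : nat) (e : rel 'I_n) (C : {set 'I_n}) : nat :=
  \big[minn/n]_(v in C) deg e v.

Definition is_K2 (n : nat) (e : rel 'I_n) (C : {set 'I_n}) : Prop :=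
  exists a b : 'I_n, a != b /\ C = [set a; b] /\ e a b.

Definition adjmx (R : rcfType) (n : nat) (e : rel 'I_n) : 'M[R]_n :=
  \matrix_(i, j) (e i j)%:R.

(* s is the list of eigenvalues (with multiplicity) of A in nonincreasing
   order: lambda_1 >= ... >= lambda_n, s`_(i-1) = lambda_i *)
Definition sorted_spectrum (R : rcfType) (n : nat) (A : 'M[R]_n) (s : seq R) : Prop :=
  sorted (fun x y => y <= x) s /\ char_poly A = \prod_(x <- s) ('X - x%:P).

(* HL-index: max(|lambda_floor((n+1)/2)|, |lambda_ceil((n+1)/2)|), 1-based
   indices; 0-based these are (n+1)/2 - 1 and (n+2)/2 - 1. *)
Definition HL_index (R : rcfType) (n : nat) (s : seq R) : R :=
  Num.max `|s`_((n.+1)./2).-1| `|s`_((n.+2)./2).-1|.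

(* Main.v *)
Require Import Defs.
From HB Require Import structures.
From mathcomp Require Import all_boot all_order all_algebra.
From mathcomp Require Import complex ring lra zify.
Set Implicit Arguments. Unset Strict Implicit. Unset Printing Implicit Defensive.
Import Order.TTheory GRing.Theory Num.Theory.
Local Open Scope ring_scope.

Lemma char_poly_conj (F : fieldType) n (P B : 'M[F]_n) : P \in unitmx ->
  char_poly (invmx P *m B *m P) = char_poly B.
Proof.
move=> Pu; rewrite /char_poly.
have -> : char_poly_mx (invmx P *m B *m P) =
  map_mx polyC (invmx P) *m char_poly_mx B *m map_mx polyC P.
  rewrite /char_poly_mx mulmxBr mulmxBl -!map_mxM.
  rewrite mul_mx_scalar -scalemxAl -mul_scalar_mx -mulmxA -map_mxM mulVmx //.
  by rewrite map_mx1 mulmx1.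
rewrite !det_mulmx !det_map_mx mulrC mulrA -rmorphM.
by rewrite -det_mulmx mulmxV // det1 mul1r.
Qed.

Lemma bip_char_poly (F : fieldType) n (A : 'M[F]_n) (f : 'I_n -> bool) :
  (forall i j, A i j != 0 -> f i != f j) -> char_poly (- A) = char_poly A.
Proof.
move=> Hf.
pose D : 'M[F]_n := diag_mx (\row_i (if f i then -1 else 1)).
have DD : D *m D = 1%:M.
  apply/matrixP => i j; rewrite mul_diag_mx !mxE.
  by case: eqP => [->|]; rewrite ?mulr0n ?mulr0 // mulr1n; case: (f j); rewrite ?mulrNN mulr1.
have Du : D \in unitmx by case: (mulmx1_unit DD).
have iD : invmx D = D.
  by rewrite -[invmx D]mulmx1 -DD mulmxA mulVmx // mul1mx.
have DAD : invmx D *m A *m D = - A.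
  rewrite iD; apply/matrixP => i j; rewrite mul_mx_diag mul_diag_mx !mxE.
  have [->|Aij] := eqVneq (A i j) 0; first by rewrite !mulr0 mul0r oppr0.
  have := Hf i j Aij.
  by case: (f i); case: (f j) => //= _; rewrite ?mulN1r ?mulrN1 ?mul1r ?mulr1.
by rewrite -DAD char_poly_conj.
Qed.

Lemma char_poly_opp (R : comNzRingType) n (A : 'M[R]_n) :
  char_poly A \Po (- 'X) = (-1) ^+ n * char_poly (- A).
Proof.
rewrite /char_poly -det_map_mx.
have -> : map_mx (comp_poly (- 'X)) (char_poly_mx A) = - char_poly_mx (- A).
  apply/matrixP => i j; rewrite !mxE /= comp_polyB comp_polyC.
  rewrite [_ \Po _](rmorphMn (comp_poly (- 'X))) /= comp_polyX.
  by rewrite polyCN mulNrn opprD opprK.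
by rewrite -scaleN1r detZ.
Qed.


Lemma prod_negX (R : comNzRingType) (s : seq R) :
  \prod_(x <- s) (- 'X - x%:P) = (-1) ^+ size s * \prod_(x <- map -%R s) ('X - x%:P).
Proof.
elim: s => [|x s IH]; first by rewrite !big_nil mul1r.
rewrite /= !big_cons IH exprS polyCN.
have -> : - 'X - x%:P = - ('X - - x%:P) :> {poly R} by rewrite opprB addrC.
ring.
Qed.

Lemma spec_sym (F : fieldType) n (A : 'M[F]_n) s : char_poly (- A) = char_poly A ->
  char_poly A = \prod_(x <- s) ('X - x%:P) -> perm_eq s (map -%R s).
Proof.
move=> Hs chA.
have sz : size s = n.
  have := size_char_poly A; rewrite chA size_prod_XsubC.
  by case.
have := char_poly_opp A; rewrite Hs {1}chA rmorph_prod /=.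
under eq_bigr do rewrite comp_polyB comp_polyC comp_polyX.
rewrite prod_negX sz => /(congr1 ( *%R ((-1) ^+ n))); rewrite !signrMK chA.
by move/prod_XsubC_eq; rewrite perm_sym.
Qed.

Section Spec.
Local Open Scope sesquilinear_scope.
Section S.
Variable R : rcfType.
Local Notation C := (R[i]).
Local Notation rc := (real_complex R).

Lemma rc_conj (x : R) : (rc x)^* = rc x.
Proof. by apply: conj_Creal; rewrite complex_real. Qed.

Lemma spectral_rayleigh n (A : 'M[R]_n) (s : seq R) :
  A^T = A -> char_poly A = \prod_(x <- s) ('X - x%:P) ->
  forall v : 'I_n,
   (exists2 x, x \in s & x ^+ 2 <= (A *m A) v v) /\
   ((forall x, x \in s -> (A *m A) v v <= x ^+ 2) ->
      forall u, u != v -> (A *m A) v u = 0).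
Proof.
move=> AT chA v.
pose Ac : 'M[C]_n := map_mx rc A.
have AcT : Ac^t* = Ac.
  by apply/matrixP => i j; rewrite !mxE rc_conj; have := congr1 (fun M : 'M_n => M i j) AT; rewrite mxE => ->.
have Acn : Ac \is normalmx by apply/normalmxP; rewrite AcT.
have /orthomx_spectralP AcE := Acn.
set P := spectralmx Ac in AcE; set d := spectral_diag Ac in AcE.
have Pu : P \is unitarymx := spectral_unitarymx Ac.
have PPt : P *m P^t* = 1%:M by apply/unitarymxP.
have PtP : P^t* *m P = 1%:M by apply: mulmx1C.
rewrite invmx_unitary // in AcE.
have dk : forall k, exists2 x, x \in s & d 0 k = rc x.
  move=> k.
  have : root (char_poly Ac) (d 0 k).
    rewrite AcE -invmx_unitary // char_poly_conj ?unitarymx_unit //.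
    rewrite char_poly_trig ?diag_mx_is_trig //.
    rewrite -(big_map (fun i => diag_mx d i i) predT (fun x => 'X - x%:P)).
    rewrite root_prod_XsubC.
    by apply/mapP; exists k; rewrite ?mem_index_enum // mxE eqxx.
  rewrite -map_char_poly chA rmorph_prod.
  rewrite (eq_bigr (fun x => 'X - (rc x)%:P)); last first.
    by move=> x _; rewrite /= map_polyXsubC.
  rewrite -(big_map rc predT (fun x => 'X - x%:P)) root_prod_XsubC.
  by case/mapP => x xs ->; exists x.
pose mu k := d 0 k * (d 0 k)^*.
have M_E : Ac *m Ac^t* = P^t* *m diag_mx (\row_k mu k) *m P.
  rewrite {2}AcE !trmx_mul !map_mxM trmxCK tr_diag_mx map_diag_mx.
  rewrite {1}AcE !mulmxA.
  rewrite -[P^t* *m diag_mx d *m P *m P^t*]mulmxA PPt mulmx1.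
  rewrite -[P^t* *m diag_mx d *m _]mulmxA; congr (_ *m _ *m _).
  apply/matrixP => i j; rewrite mul_diag_mx !mxE.
  by case: eqP => [->|]; rewrite ?mulr0 ?mul0r ?mulr1n ?mulr0n.
have Mvu : forall u, rc ((A *m A) v u) = \sum_k (P^t* v k * mu k) * P k u.
  move=> u; have -> : rc ((A *m A) v u) = (Ac *m Ac^t*) v u.
    by rewrite AcT -map_mxM [RHS]mxE.
  rewrite M_E mul_mx_diag !mxE; apply: eq_bigr => k _; rewrite !mxE //.
have Iv : forall u, \sum_k P^t* v k * P k u = (v == u)%:R.
  by move=> u; have := congr1 (fun M : 'M_n => M v u) PtP; rewrite !mxE => ->.
set m := (A *m A) v v.
pose a k := P^t* v k.
have aE : forall k, P k v = (a k)^*.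
  by move=> k; rewrite /a !mxE conjCK.
pose c k := a k * (a k)^*.
have c_ge0 : forall k, 0 <= c k by move=> k; apply: mul_conjC_ge0.
have sum_c : \sum_k c k = 1.
  have := Iv v; rewrite eqxx /= ?mulr1n => <-; apply: eq_bigr => k _; rewrite /c aE //.
have sum_cmu : \sum_k c k * mu k = rc m.
  rewrite Mvu; apply: eq_bigr => k _; by rewrite aE /c mulrAC.
have Zsum : \sum_k c k * (mu k - rc m) = 0.
  under eq_bigr do rewrite mulrBr.
  by rewrite sumrB sum_cmu -mulr_suml sum_c mul1r subrr.
have muE : forall k, exists2 x, x \in s & mu k = rc (x ^+ 2).
  move=> k; have [x xs dkx] := dk k; exists x => //.
  by rewrite /mu dkx rc_conj rmorphXn expr2.
have each0 : (forall k, rc m <= mu k) -> forall k, c k * (mu k - rc m) = 0.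
  move=> H k; apply: (psumr_eq0P _ Zsum) => // i _.
  by rewrite mulr_ge0 // subr_ge0.
split.
  case: (boolP [exists k, mu k <= rc m]).
    case/existsP => k; have [x xs ->] := muE k.
    by rewrite lecR => le; exists x.
  rewrite negb_exists => /forallP Hn.
  have lt : forall k, rc m < mu k.
    move=> k; have := Hn k; have [x xs ->] := muE k.
    by rewrite lecR ltcR ltNge.
  have H0 := each0 (fun k => ltW (lt k)).
  have : \sum_k c k = 0.
    apply: big1 => k _; have := H0 k; move/eqP; rewrite mulf_eq0.
    by rewrite subr_eq0 (gt_eqF (lt k)) orbF => /eqP.
  by rewrite sum_c => /eqP; rewrite oner_eq0.
move=> H u uv.
have le : forall k, rc m <= mu k.
  by move=> k; have [x xs ->] := muE k; rewrite lecR H.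
have H0 := each0 le.
have aMu : forall k, a k * mu k = a k * rc m.
  move=> k; have := H0 k; move/eqP; rewrite mulf_eq0 /c mul_conjC_eq0 subr_eq0.
  by case/orP => /eqP ->; rewrite ?mul0r.
have := Mvu u.
under eq_bigr do rewrite aMu mulrAC.
rewrite -mulr_suml Iv eq_sym (negPf uv) mul0r => /eqP.
by rewrite fmorph_eq0 => /eqP.
Qed.

End S.
End Spec.

Lemma hl_le (R : rcfType) n (s : seq R) lam : size s = n ->
  sorted (fun x y => y <= x) s -> perm_eq s (map -%R s) -> lam \in s ->
  HL_index n s <= `|lam|.
Proof.
move=> sz srt pm ls.
have sE : s = rev (map -%R s).
  apply: (@sorted_eq _ (fun x y => y <= x)).
  - by move=> x y z /= a b; apply: le_trans b a.
  - by move=> x y /andP[a b]; apply/le_anti; rewrite a b.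
  - exact: srt.
  - rewrite rev_sorted sorted_map; apply: sub_sorted srt => x y /=.
    by rewrite lerN2.
  - by rewrite perm_sym perm_rev perm_sym.
have symn : forall i, (i < n)%N -> s`_i = - s`_(n - i.+1).
  move=> i lt; rewrite {1}sE nth_rev size_map sz // (nth_map 0) // sz.
  lia.
have mono : forall i j, (i <= j)%N -> (j < n)%N -> s`_j <= s`_i.
  move=> i j ij jn.
  have tr : transitive (fun x y : R => y <= x).
    by move=> x y z /= a b; apply: le_trans b a.
  have := @sorted_leq_nth _ (fun x y => y <= x) tr (fun x => lexx x) 0 s srt i j.
  by apply; rewrite ?inE ?sz //; lia.
have jn : (index lam s < n)%N by rewrite -sz index_mem.
have sj : s`_(index lam s) = lam by rewrite nth_index.
set j := index lam s in jn sj.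
rewrite /HL_index /= uphalf_half.
have := odd_double_half n; set m := n./2; case: (odd n) => /= nE.
  rewrite add0n maxxx.
  have : s`_m = - s`_m by rewrite {1}symn; [congr (- s`_ _) | ]; lia.
  move=> h; have -> : s`_m = 0.
    by apply/eqP; rewrite -[_ == 0](mulrn_eq0 _ 2) mulr2n {2}h subrr.
  by rewrite normr0 normr_ge0.
rewrite add0n.
have m0 : (0 < m)%N by move: jn; rewrite -nE; lia.
have h1 : s`_(m.-1) = - s`_m by rewrite symn; [congr (- s`_ _) | ]; lia.
have h2 : s`_m <= s`_(m.-1) by apply: mono; lia.
have pos : 0 <= s`_(m.-1) by move: h2; rewrite h1 => h; lra.
rewrite -[`|s`_m|]normrN -h1 maxxx ger0_norm //.
have nl1 := ler_norm lam; have nl2 := ler_norm (- lam); rewrite normrN in nl2.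
case: (leqP j m.-1) => hj.
  have := mono j m.-1 hj; rewrite sj => h.
  have := h ltac:(lia); lra.
have := mono m j ltac:(lia) jn; rewrite sj => h; lra.
Qed.

Lemma bigmin_le (I : finType) (P : pred I) (F : I -> nat) m i :
  P i -> (\big[minn/m]_(j | P j) F j <= F i)%N.
Proof.
move=> Pi; rewrite unlock /reducebig.
have : i \in index_enum I by rewrite mem_index_enum.
elim: (index_enum I) => [//|j r IH] /=; rewrite inE => /orP[/eqP <-|ir].
  by rewrite Pi geq_minl.
case: (P j); last exact: IH.
by rewrite geq_min IH ?orbT.
Qed.

Lemma bigmin_attained (I : finType) (P : pred I) (F : I -> nat) m i0 :
  P i0 -> (forall i, P i -> F i <= m)%N ->
  exists2 i, P i & \big[minn/m]_(j | P j) F j = F i.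
Proof.
move=> Pi0 Fm; case: (@arg_minnP _ i0 P F Pi0) => i Pi Hi.
exists i => //; apply/eqP; rewrite eqn_leq bigmin_le //=.
elim/big_ind: _ => //; first exact: Fm.
by move=> x y a b; rewrite leq_min a b.
Qed.

Lemma deg_le n (e : rel 'I_n) v : (deg e v <= n)%N.
Proof. by rewrite /deg; apply: leq_trans (max_card _) _; rewrite card_ord. Qed.

Theorem theorem2p5 (R : rcfType) (n : nat) (e : rel 'I_n) (s : seq R) :
  (0 < n)%N ->
  simple_graph e ->
  bipartite e ->
  sorted_spectrum (adjmx R e) s ->
  HL_index n s <= Num.sqrt (min_degree e)%:R /\
  ((2 <= min_degree e)%N \/
   (min_degree e = 1%N /\
    exists v : 'I_n, comp_min_degree e (component e v) = 1%N
                     /\ ~ is_K2 e (component e v)) ->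
   HL_index n s < Num.sqrt (min_degree e)%:R).
Proof.
move=> n0 [esym eirr] [f fH] [srt chA].
set A := adjmx R e.
have AT : A^T = A by apply/matrixP => i j; rewrite !mxE esym.
have AAvu : forall v u, (A *m A) v u = \sum_w (e v w)%:R * (e w u)%:R.
  by move=> v u; rewrite !mxE; apply: eq_bigr => w _; rewrite !mxE.
have AAvv : forall v, (A *m A) v v = (deg e v)%:R.
  move=> v; rewrite AAvu /deg.
  under eq_bigr do rewrite (esym _ v) -natrM.
  rewrite -natr_sum; congr (_%:R).
  rewrite -sum1_card [RHS]big_mkcond /=; apply: eq_bigr => w _.
  by rewrite inE; case: (e v w).
have AA0 : forall v u w, (A *m A) v u = 0 -> e v w -> e w u -> False.
  move=> v u w; rewrite AAvu => /psumr_eq0P H evw ewu.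
  have := H (fun i _ => mulr_ge0 (ler0n _ _) (ler0n _ _)) w isT.
  by rewrite evw ewu /= mulr1 => /eqP; rewrite oner_eq0.
have sz : size s = n.
  by have := size_char_poly A; rewrite chA size_prod_XsubC; case.
have Hf : forall i j, A i j != 0 -> f i != f j.
  move=> i j; rewrite /A /adjmx mxE; case eij: (e i j); first by move=> _; apply: fH.
  by rewrite /= mulr0n eqxx.
have pm : perm_eq s (map -%R s) := spec_sym (bip_char_poly Hf) chA.
have SR := spectral_rayleigh AT chA.
have [v0 _ v0E] := @bigmin_attained _ (fun _ => true) (deg e) n (Ordinal n0) isT (fun v _ => deg_le e v).
have dE : min_degree e = deg e v0 by rewrite /min_degree; exact: v0E.
have dle : forall v, (min_degree e <= deg e v)%N.
  by move=> v; apply: (@bigmin_le _ (fun _ => true)).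
have nbr_pos : forall v, (0 < deg e v)%N -> exists w, e v w.
  by move=> v; rewrite /deg card_gt0 => /set0Pn [w]; rewrite inE; exists w.
have two_nbr : forall w v, (2 <= deg e w)%N -> exists u, u != v /\ e w u.
  move=> w v; rewrite /deg (cardsD1 v) => h.
  have : (0 < #|[set u | e w u] :\ v|)%N by move: h; case: (v \in _) => /=; lia.
  by rewrite card_gt0 => /set0Pn [u]; rewrite !inE => /andP[uv ewu]; exists u.
have strict_or : forall v, (exists2 x, x \in s & x ^+ 2 < (deg e v)%:R) \/
    (forall u w, u != v -> e v w -> e w u -> False).
  move=> v; case: (boolP (has (fun x => x ^+ 2 < (deg e v)%:R) s)).
    by case/hasP => x xs lt; left; exists x.
  move/hasPn => H; right => u w uv; apply: AA0.
  apply: ((SR v).2 _ u uv) => x xs; rewrite AAvv leNgt; exact: H.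
have to_hl : forall x, x \in s -> HL_index n s <= Num.sqrt (x ^+ 2).
  by move=> x xs; rewrite sqrtr_sqr; exact: hl_le.
split.
  have [x xs le] := (SR v0).1; rewrite AAvv -dE in le.
  by apply: le_trans (to_hl x xs) _; rewrite ler_sqrt // ler0n.
have strict : forall v, deg e v = min_degree e ->
    (exists u w, u != v /\ e v w /\ e w u) ->
    HL_index n s < Num.sqrt (min_degree e)%:R.
  move=> v dv [u [w [uv [evw ewu]]]]; case: (strict_or v) => [[x xs lt]|H].
    apply: le_lt_trans (to_hl x xs) _; rewrite ltr_sqrt -dv //.
    exact: le_lt_trans (sqr_ge0 x) lt.
  by case: (H u w uv evw ewu).
case => [d2|[d1 [x [cx nK2]]]].
  apply: (strict v0); first by rewrite dE.
  have [w evw] := nbr_pos v0 ltac:(rewrite -dE; lia).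
  have [u [uv ewu]] := two_nbr w v0 (leq_trans d2 (dle w)).
  by exists u, w.
set C := component e x in cx nK2.
have xC : x \in C by rewrite inE connect0.
have [u uC du] := @bigmin_attained _ (fun v => v \in C) (deg e) n x xC (fun v _ => deg_le e v).
have du1 : deg e u = 1%N by rewrite -du; exact: cx.
apply: (strict u); first by rewrite d1.
have [w euw] := nbr_pos u ltac:(by rewrite du1).
case: (boolP [exists u', (u' != u) && e w u']).
  by case/existsP => u' /andP[u'u ewu']; exists u', w.
move/existsPn => H; exfalso; apply: nK2; exists u, w.
have uw : u != w by apply/eqP => uw; move: euw; rewrite uw eirr.
have nu : forall z, e u z -> z = w.
  move: du1; rewrite /deg => /eqP /cards1P [z zE] y euy.
  have : y \in [set z] by rewrite -zE inE.
  have : w \in [set z] by rewrite -zE inE.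
  by rewrite !inE => /eqP -> /eqP.
have nw : forall z, e w z -> z = u.
  by move=> z ewz; have := H z; rewrite ewz andbT negbK => /eqP.
set S := [set u; w].
have Scl : closed e S.
  have one : forall a b, e a b -> a \in S -> b \in S.
    move=> a b eab; rewrite !inE => /orP[] /eqP ea; subst a.
      by rewrite (nu b eab) eqxx orbT.
    by rewrite (nw b eab) eqxx.
  move=> a b eab; apply/idP/idP; first exact: one.
  by apply: one; rewrite esym.
have cxu : connect e x u by move: uC; rewrite inE.
have csym := sym_connect_sym esym.
split => //; split => //.
apply/setP => y; rewrite [in LHS]inE.
have -> : connect e x y = connect e u y.
  apply/idP/idP => h; first by apply: connect_trans h; rewrite csym.
  exact: connect_trans cxu h.
apply/idP/idP => h.
  by rewrite -(closed_connect Scl h) !inE eqxx.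
move: h; rewrite !inE => /orP[] /eqP ->; first exact: connect0.
exact: connect1.
Qed.
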